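(* Let $a,b,c>0$ with $a,b\in(0,1)$, $a<c$ and $b<c$. Let $F(x)=F(a,b;c;x)$ and $F_1(x)=F(1-x)$ for $x\in(0,1)$. Then the function $f(x)=x(1-x)F(x)F_1(x)$ is increasing on $(0,1/2]$ and decreasing on $[1/2,1)$.
   Context: $F(a,b;c;x)=\sum_{n=0}^\infty\frac{(a,n)(b,n)}{(c,n)\,n!}x^n$ for $|x|<1$ is the Gaussian hypergeometric function, where $(a,0)=1$ and $(a,n)=a(a+1)\cdots(a+n-1)$ for $n\ge1$. *)

(* Defs.v *)
From Stdlib Require Import Reals Arith Factorial.
From Coquelicot Require Import Coquelicot.
Open Scope R_scope.

Fixpoint poch (a : R) (n : nat) : R :=
  match n with
  | O => 1
  | S k => poch a k * (a + INR k)
  end.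

(* Gaussian hypergeometric function F(a,b;c;x) = sum_n (a,n)(b,n)/((c,n) n!) x^n,
   used for |x| < 1 (where the series converges when c > 0). *)
Definition hyp2F1 (a b c x : R) : R :=
  Series (fun n => poch a n * poch b n / (poch c n * INR (fact n)) * x ^ n).

(* Main.v *)
Require Import Defs.
From Stdlib Require Import Reals Arith Factorial Lra Lia.
From Coquelicot Require Import Coquelicot.
Open Scope R_scope.

Definition Ac (a b c : R) (n : nat) : R :=
  poch a n * poch b n / (poch c n * INR (fact n)).

Lemma poch_pos a n : 0 < a -> 0 < poch a n.
Proof.
  intros Ha; induction n as [|n IH]; simpl; [lra|].
  apply Rmult_lt_0_compat; [exact IH|]. pose proof (pos_INR n); lra.
Qed.

Lemma INR_fact_pos n : 0 < INR (fact n).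
Proof. apply lt_0_INR. apply lt_O_fact. Qed.

Lemma Ac_S a b c n : 0 < c ->
  Ac a b c (S n) = Ac a b c n * ((a + INR n) * (b + INR n) / ((c + INR n) * INR (S n))).
Proof.
  intros Hc. unfold Ac. simpl poch.
  replace (fact (S n)) with (S n * fact n)%nat by reflexivity.
  rewrite mult_INR.
  pose proof (poch_pos c n Hc). pose proof (INR_fact_pos n).
  pose proof (pos_INR n). rewrite S_INR.
  field. repeat split; lra.
Qed.

Lemma Ac_pos a b c n : 0 < a -> 0 < b -> 0 < c -> 0 < Ac a b c n.
Proof.
  intros. unfold Ac. pose proof (poch_pos a n H). pose proof (poch_pos b n H0).
  pose proof (poch_pos c n H1). pose proof (INR_fact_pos n).
  apply Rdiv_lt_0_compat; apply Rmult_lt_0_compat; auto.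
Qed.

Lemma div_le_1 p q : 0 < q -> p <= q -> p / q <= 1.
Proof. intros. unfold Rdiv. rewrite <- (Rinv_r q) by lra.
  apply Rmult_le_compat_r; [apply Rlt_le, Rinv_0_lt_compat|]; lra. Qed.

Lemma Ac_le1 a b c n : 0 < a < 1 -> 0 < b -> b < c -> Ac a b c n <= 1.
Proof.
  intros Ha Hb Hbc. induction n as [|n IH].
  - unfold Ac; simpl. lra.
  - rewrite Ac_S by lra. pose proof (pos_INR n). rewrite S_INR.
    pose proof (Ac_pos a b c n ltac:(lra) Hb ltac:(lra)).
    assert (Hr : (a + INR n) * (b + INR n) / ((c + INR n) * (INR n + 1)) <= 1).
    { apply div_le_1. apply Rmult_lt_0_compat; lra.
      rewrite (Rmult_comm (c + INR n)). apply Rmult_le_compat; lra. }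
    assert (0 <= (a + INR n) * (b + INR n) / ((c + INR n) * (INR n + 1))).
    { apply Rlt_le, Rdiv_lt_0_compat; apply Rmult_lt_0_compat; lra. }
    apply Rle_trans with (1*1); [apply Rmult_le_compat; lra | lra].
Qed.

Lemma Ac_radius a b c x : 0 < a < 1 -> 0 < b -> b < c -> Rabs x < 1 ->
  Rbar_lt (Rabs x) (CV_radius (Ac a b c)).
Proof.
  intros Ha Hb Hbc Hx.
  set (r := (Rabs x + 1) / 2).
  assert (Hr0 : 0 <= r) by (pose proof (Rabs_pos x); unfold r; lra).
  assert (Hd : CV_disk (Ac a b c) r).
  { unfold CV_disk. apply (@ex_series_le R_AbsRing R_CompleteNormedModule _ (fun n => r ^ n)).
    - intros n. change (norm (Rabs (Ac a b c n * r ^ n))) with (Rabs (Rabs (Ac a b c n * r ^ n))).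
      rewrite Rabs_Rabsolu, Rabs_mult, (Rabs_pos_eq (r ^ n)) by (apply pow_le; lra).
      rewrite Rabs_pos_eq by (apply Rlt_le, Ac_pos; lra).
      pose proof (Ac_le1 a b c n Ha Hb Hbc). pose proof (pow_le r n Hr0).
      replace (r ^ n) with (1 * r ^ n) at 2 by ring. apply Rmult_le_compat_r; lra.
    - apply ex_series_geom. rewrite Rabs_pos_eq by lra. unfold r. lra. }
  assert (Hle : Rbar_le r (CV_radius (Ac a b c))).
  { unfold CV_radius. destruct (Lub_Rbar_correct (CV_disk (Ac a b c))) as [H1 _].
    apply H1. exact Hd. }
  apply Rbar_lt_le_trans with r; [simpl; unfold r; lra | exact Hle].
Qed.
Lemma pow_cross x y i M : 0 < x -> x < y -> (i <= M)%nat -> x ^ M * y ^ i <= x ^ i * y ^ M.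
Proof.
  intros Hx Hxy HiM. replace M with (i + (M - i))%nat by lia.
  rewrite !pow_add.
  assert (0 <= x ^ i) by (apply pow_le; lra).
  assert (0 <= y ^ i) by (apply pow_le; lra).
  assert (0 <= x ^ (M - i)) by (apply pow_le; lra).
  assert (x ^ (M - i) <= y ^ (M - i)) by (apply pow_incr; lra).
  replace (x ^ i * x ^ (M - i) * y ^ i) with ((x ^ i * y ^ i) * x ^ (M - i)) by ring.
  replace (x ^ i * (y ^ i * y ^ (M - i))) with ((x ^ i * y ^ i) * y ^ (M - i)) by ring.
  apply Rmult_le_compat_l; [apply Rmult_le_pos|]; auto.
Qed.

Section Key.
Variables (A rho : nat -> R) (x y : R).
Hypothesis HA : forall n, 0 < A n.
Hypothesis Hrho : forall n m, (n < m)%nat -> rho m < rho n.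
Hypothesis Hx : 0 < x.
Hypothesis Hxy : x < y.

Definition B n := rho n * A n.
Definition T z N := sum_f_R0 (fun i => B i * z ^ i) N.
Definition U z N := sum_f_R0 (fun i => A i * z ^ i) N.

Definition Inner M N := T x N * (A M * y ^ M) + (rho M * A M * x ^ M) * U y N
       - T y N * (A M * x ^ M) - (rho M * A M * y ^ M) * U x N.

Lemma Inner_S M N : Inner M (S N) = Inner M N +
  A (S N) * A M * (rho (S N) - rho M) * (x ^ (S N) * y ^ M - x ^ M * y ^ (S N)).
Proof. unfold Inner, T, U, B. simpl. ring. Qed.

Lemma Inner_0 M : Inner M 0 =
  A 0%nat * A M * (rho 0%nat - rho M) * (x ^ 0 * y ^ M - x ^ M * y ^ 0).
Proof. unfold Inner, T, U, B. simpl. ring. Qed.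

Lemma inner_nonneg M N : (N < M)%nat -> 0 <= Inner M N.
Proof.
  intros HNM. induction N as [|N IH].
  - rewrite Inner_0.
    pose proof (pow_cross x y 0 M Hx Hxy ltac:(lia)). pose proof (Hrho 0 M HNM).
    pose proof (HA 0). pose proof (HA M).
    apply Rmult_le_pos; [apply Rmult_le_pos; [apply Rmult_le_pos|]|]; lra.
  - assert (IH' := IH ltac:(lia)).
    pose proof (pow_cross x y (S N) M Hx Hxy ltac:(lia)). pose proof (Hrho (S N) M HNM).
    pose proof (HA (S N)). pose proof (HA M).
    assert (0 <= A (S N) * A M * (rho (S N) - rho M) * (x ^ (S N) * y ^ M - x ^ M * y ^ (S N))).
    { apply Rmult_le_pos; [apply Rmult_le_pos; [apply Rmult_le_pos|]|]; lra. }
    rewrite Inner_S. lra.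
Qed.

Definition Sq N := T x N * U y N - T y N * U x N.

Lemma S_incr N : Sq N <= Sq (S N).
Proof.
  pose proof (inner_nonneg (S N) N ltac:(lia)).
  assert (E : Sq (S N) = Sq N + Inner (S N) N).
  { unfold Sq, Inner, T, U, B. simpl. ring. }
  lra.
Qed.
Lemma Sq_1 : 0 < Sq 1.
Proof.
  assert (E : Sq 1 = A 0%nat * A 1%nat * (rho 0%nat - rho 1%nat) * (y - x)).
  { unfold Sq, T, U, B. simpl. ring. }
  rewrite E. pose proof (HA 0). pose proof (HA 1). pose proof (Hrho 0 1 ltac:(lia)).
  apply Rmult_lt_0_compat; [apply Rmult_lt_0_compat; [apply Rmult_lt_0_compat|]|]; lra.
Qed.

Lemma Sq_ge n : Sq 1 <= Sq (S n).
Proof.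
  induction n as [|n IH]; [lra|]. pose proof (S_incr (S n)). lra.
Qed.
End Key.

Lemma pseries_lim (a : nat -> R) z : ex_pseries a z ->
  is_lim_seq (fun N => sum_f_R0 (fun i => a i * z ^ i) N) (PSeries a z).
Proof.
  intros H. apply PSeries_correct in H.
  apply is_lim_seq_ext with (sum_n (fun k => scal (pow_n z k) (a k))).
  - intros N. rewrite sum_n_Reals. apply sum_eq. intros i _.
    rewrite pow_n_pow. unfold scal; simpl. unfold mult; simpl. ring.
  - exact H.
Qed.

Lemma key_ineq (A rho : nat -> R) (x y : R) :
  (forall n, 0 < A n) -> (forall n m, (n < m)%nat -> rho m < rho n) ->
  0 < x -> x < y ->
  ex_pseries (fun n => rho n * A n) x -> ex_pseries (fun n => rho n * A n) y ->
  ex_pseries A x -> ex_pseries A y ->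
  0 < PSeries (fun n => rho n * A n) x * PSeries A y
      - PSeries (fun n => rho n * A n) y * PSeries A x.
Proof.
  intros HA Hrho Hx Hxy E1 E2 E3 E4.
  assert (H1 : 0 < Sq A rho x y 1) by (apply Sq_1; assumption).
  set (s1 := Sq A rho x y 1) in *.
  assert (Hlim : is_lim_seq (fun N => Sq A rho x y (S N))
     (PSeries (fun n => rho n * A n) x * PSeries A y
      - PSeries (fun n => rho n * A n) y * PSeries A x)).
  { apply (is_lim_seq_incr_1 (Sq A rho x y)).
    apply is_lim_seq_minus'; apply is_lim_seq_mult'; apply pseries_lim; assumption. }
  assert (Hge : forall n, s1 <= Sq A rho x y (S n)) by (intro; apply Sq_ge; assumption).
  assert (Hle := is_lim_seq_le (fun _ => s1) _ s1 _ Hge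
     (is_lim_seq_const s1) Hlim).
  simpl in Hle. lra.
Qed.

Section Main.
Variables a b c : R.
Hypotheses (Ha : 0 < a < 1) (Hb : 0 < b < 1) (Hc : 0 < c) (Hac : a < c) (Hbc : b < c).

Definition rho (n : nat) : R :=
  ((a + INR n) * (b + INR n) - (INR n + 1) * (c + INR n)) / (c + INR n).

Lemma rho_dec n m : (n < m)%nat -> rho m < rho n.
Proof.
  intros Hnm. apply lt_INR in Hnm. pose proof (pos_INR n).
  assert (E : rho n - rho m =
     (c - a) * (c - b) * (INR m - INR n) / ((c + INR n) * (c + INR m))).
  { unfold rho. field. split; lra. }
  assert (0 < (c - a) * (c - b) * (INR m - INR n) / ((c + INR n) * (c + INR m))).
  { apply Rdiv_lt_0_compat; repeat apply Rmult_lt_0_compat; lra. }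
  lra.
Qed.

Lemma rho_neg n : rho n < 0.
Proof.
  pose proof (pos_INR n). unfold rho. unfold Rdiv.
  rewrite <- (Rmult_0_l (/ (c + INR n))).
  apply Rmult_lt_compat_r; [apply Rinv_0_lt_compat; lra|].
  assert (a * b < c) by nra. nra.
Qed.

Let A := Ac a b c.

Lemma A_pos n : 0 < A n.
Proof. apply Ac_pos; lra. Qed.

Lemma rad x : Rabs x < 1 -> Rbar_lt (Rabs x) (CV_radius A).
Proof. intros. apply Ac_radius; lra. Qed.

Lemma coef_id n :
  PS_minus (PS_minus (PS_derive A) (PS_incr_1 (PS_derive A))) A n = rho n * A n.
Proof.
  assert (H : PS_minus (PS_minus (PS_derive A) (PS_incr_1 (PS_derive A))) A n
              = INR (S n) * A (S n) - INR n * A n - A n).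
  { unfold PS_minus, PS_derive, PS_incr_1. destruct n as [|m].
    - change (INR 1 * A 1%nat + - 0 + - A 0%nat = INR 1 * A 1%nat - INR 0 * A 0%nat - A 0%nat).
      simpl INR. ring.
    - change (INR (S (S m)) * A (S (S m)) + - (INR (S m) * A (S m)) + - A (S m) =
              INR (S (S m)) * A (S (S m)) - INR (S m) * A (S m) - A (S m)). ring. }
  rewrite H. cut (INR (S n) * A (S n) - INR n * A n - A n = rho n * A n); [auto|].
  assert (E : INR (S n) * A (S n) = (INR n + 1) * A n * ((a + INR n) * (b + INR n) / ((c + INR n) * (INR n + 1)))).
  { unfold A. rewrite Ac_S by lra. rewrite S_INR. ring. }
  rewrite E. pose proof (pos_INR n). unfold rho. field. lra.
Qed.

Lemma ident x : Rabs x < 1 ->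
  (1 - x) * PSeries (PS_derive A) x - PSeries A x = PSeries (fun n => rho n * A n) x.
Proof.
  intros Hx.
  rewrite <- (PSeries_ext _ _ x coef_id).
  assert (E1 := ex_pseries_derive A x (rad x Hx)).
  assert (E2 := CV_radius_inside A x (rad x Hx)).
  rewrite PSeries_minus; [| apply ex_pseries_minus; [exact E1| apply ex_pseries_incr_1; exact E1] | exact E2].
  rewrite PSeries_minus; [| exact E1 | apply ex_pseries_incr_1; exact E1].
  rewrite PSeries_incr_1. ring.
Qed.

Lemma ex_G x : Rabs x < 1 -> ex_pseries (fun n => rho n * A n) x.
Proof.
  intros Hx. apply (ex_pseries_ext _ _ x coef_id).
  assert (E1 := ex_pseries_derive A x (rad x Hx)).
  assert (E2 := CV_radius_inside A x (rad x Hx)).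
  apply ex_pseries_minus; [apply ex_pseries_minus; [exact E1| apply ex_pseries_incr_1; exact E1] | exact E2].
Qed.

Lemma F_pos x : 0 < x < 1 -> 0 < PSeries A x.
Proof.
  intros Hx.
  assert (Hr : Rabs x < 1) by (rewrite Rabs_pos_eq; lra).
  assert (L := pseries_lim A x (CV_radius_inside A x (rad x Hr))).
  assert (Hge : forall N, A 0%nat <= sum_f_R0 (fun i => A i * x ^ i) N).
  { induction N as [|N IH]; simpl; [lra|].
    pose proof (A_pos (S N)). pose proof (pow_lt x (S N) ltac:(lra)).
    simpl in H0. assert (0 < A (S N) * (x * x ^ N)) by (apply Rmult_lt_0_compat; lra). lra. }
  pose proof (is_lim_seq_le _ _ _ _ Hge (is_lim_seq_const (A 0%nat)) L). simpl in H.
  pose proof (A_pos 0). lra.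
Qed.

Lemma G_neg x : 0 < x < 1 -> PSeries (fun n => rho n * A n) x < 0.
Proof.
  intros Hx.
  assert (Hr : Rabs x < 1) by (rewrite Rabs_pos_eq; lra).
  assert (L := pseries_lim _ x (ex_G x Hr)).
  assert (Hge : forall N, sum_f_R0 (fun i => rho i * A i * x ^ i) N <= rho 0%nat * A 0%nat).
  { induction N as [|N IH]; simpl; [lra|].
    pose proof (A_pos (S N)). pose proof (pow_lt x (S N) ltac:(lra)). pose proof (rho_neg (S N)).
    simpl in H0. assert (0 < A (S N) * (x * x ^ N)) by (apply Rmult_lt_0_compat; lra).
    assert (rho (S N) * A (S N) * (x * x ^ N) < 0) by (rewrite Rmult_assoc; nra). lra. }
  pose proof (is_lim_seq_le _ _ _ _ Hge L (is_lim_seq_const (rho 0%nat * A 0%nat))). simpl in H.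
  pose proof (A_pos 0). pose proof (rho_neg 0). nra.
Qed.

Definition fp (t : R) : R :=
  ((1 - 2 * t) * PSeries A t + t * (1 - t) * PSeries (PS_derive A) t) * PSeries A (1 - t)
  - t * (1 - t) * PSeries A t * PSeries (PS_derive A) (1 - t).

Lemma f_deriv t : 0 < t < 1 ->
  is_derive (fun t => t * (1 - t) * PSeries A t * PSeries A (1 - t)) t (fp t).
Proof.
  intros Ht.
  assert (H1 : Rabs t < 1) by (rewrite Rabs_pos_eq; lra).
  assert (H2 : Rabs (1 - t) < 1) by (rewrite Rabs_pos_eq; lra).
  auto_derive.
  - replace (1 + - t) with (1 - t) by ring.
    split; [apply ex_derive_PSeries, rad; exact H1|].
    split; [apply ex_derive_PSeries, rad; exact H2| exact I].
  - replace (1 + - t) with (1 - t) by ring.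
    rewrite !Derive_PSeries by (apply rad; assumption).
    unfold fp. ring.
Qed.

Lemma fp_pos t : 0 < t < 1/2 -> 0 < fp t.
Proof.
  intros Ht. set (s := 1 - t).
  assert (Hst : t < s) by (unfold s; lra).
  assert (H1 : Rabs t < 1) by (rewrite Rabs_pos_eq; lra).
  assert (H2 : Rabs s < 1) by (unfold s; rewrite Rabs_pos_eq; lra).
  assert (It := ident t H1). assert (Is := ident s H2).
  replace (1 - s) with t in Is by (unfold s; ring).
  assert (K := key_ineq A rho t s A_pos rho_dec ltac:(lra) Hst (ex_G t H1) (ex_G s H2)
     (CV_radius_inside A t (rad t H1)) (CV_radius_inside A s (rad s H2))).
  assert (Gs := G_neg s ltac:(unfold s; lra)).
  assert (Ft := F_pos t ltac:(lra)).
  assert (Fs := F_pos s ltac:(unfold s; lra)).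
  set (PF := PSeries A) in *. set (PD := PSeries (PS_derive A)) in *.
  set (PG := PSeries (fun n => rho n * A n)) in *.
  assert (E : fp t = t * (PG t * PF s - PG s * PF t) + (s - t) * (PF t * - PG s)
     + t * PF s * ((1 - t) * PD t - PF t - PG t) - (1 - t) * PF t * (t * PD s - PF s - PG s)).
  { unfold fp. fold s. fold PF PD. unfold s. ring. }
  rewrite E. rewrite It, Is.
  assert (0 < t * (PG t * PF s - PG s * PF t)) by (apply Rmult_lt_0_compat; lra).
  assert (0 < (s - t) * (PF t * - PG s)) by (apply Rmult_lt_0_compat; [lra| apply Rmult_lt_0_compat; lra]).
  lra.
Qed.

End Main.

Theorem theorem3p3 (a b c : R) :
  0 < a < 1 -> 0 < b < 1 -> 0 < c -> a < c -> b < c ->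
  let f := fun x => x * (1 - x) * hyp2F1 a b c x * hyp2F1 a b c (1 - x) in
  (forall x y, 0 < x -> x < y -> y <= 1/2 -> f x < f y) /\
  (forall x y, 1/2 <= x -> x < y -> y < 1 -> f y < f x).
Proof.
  intros Ha Hb Hc Hac Hbc f.
  assert (P1 : forall x y, 0 < x -> x < y -> y <= 1/2 -> f x < f y).
  { intros x y Hx Hxy Hy.
    destruct (MVT_cor2 f (fp a b c) x y Hxy) as [z [Ez Hz]].
    - intros z Hz. apply is_derive_Reals. apply f_deriv; try assumption. lra.
    - assert (0 < fp a b c z) by (apply fp_pos; try assumption; lra).
      assert (0 < fp a b c z * (y - x)) by (apply Rmult_lt_0_compat; lra). lra. }
  split; [exact P1|].
  intros x y Hx Hxy Hy.
  assert (Sym : forall t, f (1 - t) = f t).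
  { intros t. unfold f. replace (1 - (1 - t)) with t by ring. ring. }
  rewrite <- (Sym y), <- (Sym x). apply P1; lra.
Qed.
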